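(* Let $X$ be a Banach ideal space over a $\sigma$-finite measure space $(\Omega,\Sigma,\mu)$ with the semi-Fatou property such that $\operatorname{supp}(X_a)=\operatorname{supp}(X)$. Then $X$ contains a lattice isometric copy of $\ell_\infty$ if and only if there exists $f\in X$ with $\|f\|_X=\operatorname{dist}_X(f,X_a)=1$.
   Context: A Banach ideal space $X$ on a complete $\sigma$-finite measure space $(\Omega,\Sigma,\mu)$ is a Banach space $X\subset L_0(\Omega,\Sigma,\mu)$ (real measurable functions modulo a.e. equality) such that if $|f|\le|g|$ a.e., $f\in L_0$ and $g\in X$, then $f\in X$ and $\|f\|_X\le\|g\|_X$. An element $x\in X$ is order continuous if for every sequence $0\le x_n\le|x|$ with $x_n\downarrow 0$ (decreasing with infimum $0$) one has $\|x_n\|_X\to0$; $X_a$ denotes the closed ideal of all order continuous elements of $X$. The support $\operatorname{supp}(Y)$ of a subspace $Y\subset L_0$ is the smallest measurable set $A$ (up to null sets) with $f\chi_{\Omega\setminus A}=0$ for all $f\in Y$. $X$ has the semi-Fatou property if $0\le x_n\uparrow x$ with $x_n,x\in X$ implies $\|x_n\|_X\to\|x\|_X$. $\operatorname{dist}_X(f,M)=\inf\{\|f-m\|_X: m\in M\}$. ''$X$ contains a lattice isometric copy of $\ell_\infty$'' means there is a linear isometric embedding $T:\ell_\infty\to X$ which is a lattice homomorphism (preserves the lattice operations). *)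

(* Defs.v *)
From HB Require Import structures.
From mathcomp Require Import all_boot all_order all_algebra.
From mathcomp Require Import all_classical all_reals all_analysis.
Set Implicit Arguments. Unset Strict Implicit. Unset Printing Implicit Defensive.
Import Order.TTheory GRing.Theory Num.Theory.
Import numFieldNormedType.Exports.
Local Open Scope classical_set_scope.
Local Open Scope ring_scope.

Section BIS.
Context (d : measure_display) (T : measurableType d) (R : realType)
  (mu : {measure set T -> \bar R}).

(* Elements of L_0 are represented by measurable functions T -> R;
   all equalities/inequalities between them are understood a.e. *)
Definition L0 (f : T -> R) : Prop := measurable_fun setT f.

Definition banach_ideal_space (X : set (T -> R)) (N : (T -> R) -> R) : Prop :=
  [/\
      (forall f, X f -> L0 f),
      X (fun _ => 0) /\
      (forall f g, X f -> X g -> X (f \+ g)) /\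
      (forall (c : R) f, X f -> X (fun x => c * f x)),
      (forall f, X f -> 0 <= N f) /\
      (forall f g, X f -> X g -> N (f \+ g) <= N f + N g) /\
      (forall (c : R) f, X f -> N (fun x => c * f x) = `|c| * N f) /\
      (forall f, X f -> N f = 0 -> {ae mu, forall x, f x = 0}),
      (forall u : nat -> T -> R, (forall n, X (u n)) ->
        (forall e : R, 0 < e -> exists M : nat, forall m n : nat,
            (M <= m)%N -> (M <= n)%N -> N (u m \- u n) < e) ->
        exists2 g, X g & (fun n => N (u n \- g)) @ \oo --> (0 : R)) &
      (forall f g, L0 f -> X g -> {ae mu, forall x, `|f x| <= `|g x|} ->
         X f /\ N f <= N g)].

Definition order_continuous (X : set (T -> R)) (N : (T -> R) -> R)
  (x : T -> R) : Prop :=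
  X x /\
  forall u : nat -> T -> R, (forall n, L0 (u n)) ->
    {ae mu, forall t, forall n, 0 <= u n t <= `|x t|} ->
    {ae mu, forall t, forall n, u n.+1 t <= u n t} ->
    {ae mu, forall t, (fun n => u n t) @ \oo --> (0 : R)} ->
    (fun n => N (u n)) @ \oo --> (0 : R).

Definition Xa (X : set (T -> R)) (N : (T -> R) -> R) : set (T -> R) :=
  [set x | order_continuous X N x].

Definition is_support (Y : set (T -> R)) (A : set T) : Prop :=
  [/\ measurable A,
      (forall f, Y f -> {ae mu, forall x, ~ A x -> f x = 0}) &
      (forall B, measurable B ->
         (forall f, Y f -> {ae mu, forall x, ~ B x -> f x = 0}) ->
         mu (A `\` B) = 0%E)].

Definition same_support (Y1 Y2 : set (T -> R)) : Prop :=
  exists A, is_support Y1 A /\ is_support Y2 A.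

Definition semi_fatou (X : set (T -> R)) (N : (T -> R) -> R) : Prop :=
  forall (u : nat -> T -> R) (x : T -> R), (forall n, X (u n)) -> X x ->
    {ae mu, forall t, forall n, 0 <= u n t <= u n.+1 t} ->
    {ae mu, forall t, (fun n => u n t) @ \oo --> x t} ->
    (fun n => N (u n)) @ \oo --> N x.

Definition distX (N : (T -> R) -> R) (f : T -> R) (M : set (T -> R)) : R :=
  inf [set N (f \- m) | m in M].

Definition linf : set (nat -> R) := [set a | exists C : R, forall n, `|a n| <= C].
Definition linf_norm (a : nat -> R) : R := sup [set `|a n| | n in [set: nat]].

Definition lattice_isometric_embedding (X : set (T -> R)) (N : (T -> R) -> R)
  (J : (nat -> R) -> T -> R) : Prop :=
  [/\ (forall a, linf a -> X (J a)),
      (forall (c : R) a b, linf a -> linf b ->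
         {ae mu, forall t, J (fun n => c * a n + b n) t = c * J a t + J b t}),
      (forall a, linf a -> N (J a) = linf_norm a),
      (forall a b, linf a -> linf b ->
         {ae mu, forall t, J (fun n => Num.max (a n) (b n)) t = Num.max (J a t) (J b t)}) &
      (forall a b, linf a -> linf b ->
         {ae mu, forall t, J (fun n => Num.min (a n) (b n)) t = Num.min (J a t) (J b t)})].

Definition contains_lattice_isometric_linf (X : set (T -> R)) (N : (T -> R) -> R) : Prop :=
  exists J, lattice_isometric_embedding X N J.

End BIS.

(* Main.v *)
Require Import Defs.
From HB Require Import structures.
From mathcomp Require Import all_boot all_order all_algebra.
From mathcomp Require Import all_classical all_reals all_analysis.
From mathcomp Require Import measurable_realfun.
From mathcomp Require Import lra zify.
Import Order.TTheory GRing.Theory Num.Theory.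
Import numFieldNormedType.Exports.
Local Open Scope classical_set_scope.
Local Open Scope ring_scope.

Section Gen.
Context {d : measure_display} {T : measurableType d} {R : realType}
  {mu : {measure set T -> \bar R}} {X : set (T -> R)} {N : (T -> R) -> R}
  (hX : banach_ideal_space mu X N).
Implicit Types (f g : T -> R).

Lemma XL0 {f} : X f -> measurable_fun setT f.
Proof. by case: hX => h _ _ _ _; exact: h. Qed.

Lemma X0 : X (fun _ => 0).
Proof. by case: hX => _ [h _] _ _ _. Qed.

Lemma XD {f g} : X f -> X g -> X (f \+ g).
Proof. by case: hX => _ [_ [h _]] _ _ _; exact: h. Qed.

Lemma XZ c {f} : X f -> X (fun x => c * f x).
Proof. by case: hX => _ [_ [_ h]] _ _ _; exact: h. Qed.

Lemma Nge0 {f} : X f -> 0 <= N f.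
Proof. by case: hX => _ _ [h _] _ _; exact: h. Qed.

Lemma Ntri {f g} : X f -> X g -> N (f \+ g) <= N f + N g.
Proof. by case: hX => _ _ [_ [h _]] _ _; exact: h. Qed.

Lemma Nhom c {f} : X f -> N (fun x => c * f x) = `|c| * N f.
Proof. by case: hX => _ _ [_ [_ [h _]]] _ _; exact: h. Qed.

Lemma ideal_ae {f g} : measurable_fun setT f -> X g ->
  {ae mu, forall x, `|f x| <= `|g x|} -> X f /\ N f <= N g.
Proof. by case: hX => _ _ _ _ h; exact: h. Qed.

Lemma ideal {f g} : measurable_fun setT f -> X g ->
  (forall x, `|f x| <= `|g x|) -> X f /\ N f <= N g.
Proof. by move=> mf Xg h; apply: ideal_ae => //; exact: aeW. Qed.

Lemma N_eq {f g} : measurable_fun setT f -> X g ->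
  (forall x, `|f x| = `|g x|) -> N f = N g.
Proof.
move=> mf Xg h.
have [Xf le1] := ideal mf Xg (fun x => ltac:(by rewrite h)).
have [_ le2] := ideal (XL0 Xg) Xf (fun x => ltac:(by rewrite h)).
by apply/eqP; rewrite eq_le le1 le2.
Qed.

Lemma N0 : N (fun _ => 0) = 0.
Proof.
by have := Nhom 0 X0; rewrite normr0 !mul0r.
Qed.

End Gen.

Section Xa_lemmas.
Context {d : measure_display} {T : measurableType d} {R : realType}
  {mu : {measure set T -> \bar R}} {X : set (T -> R)} {N : (T -> R) -> R}
  (hX : banach_ideal_space mu X N).
Implicit Types (f g x y : T -> R).

Lemma mnorm {f} : measurable_fun setT f -> measurable_fun setT (fun t => `|f t|).
Proof. by move=> mf; apply: measurableT_comp => //; exact: normr_measurable. Qed.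

Lemma mscale (c : R) {f} : measurable_fun setT f -> measurable_fun setT (fun t => c * f t).
Proof. by move=> mf; apply: measurable_funM => //; exact: measurable_cst. Qed.

Lemma cvg0_le (u v : nat -> R) : (forall n, 0 <= u n <= v n) ->
  v @ \oo --> (0:R) -> u @ \oo --> (0:R).
Proof.
move=> h hv; apply: (@squeeze_cvgr _ _ _ _ (fun=> 0) v) => //.
  by near=> n; exact: h.
exact: cvg_cst.
Unshelve. all: by end_near.
Qed.

Lemma Xa0 : Xa mu X N (fun _ => 0).
Proof.
split; first exact: X0 hX.
move=> u mu_ h1 _ _.
have h n : N (u n) = 0.
  have h1' : {ae mu, forall t, `|u n t| <= `|(fun _ : T => (0:R)) t|}.
    by apply: filterS h1 => t /(_ n) /andP[a b]; rewrite ger0_norm.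
  have [Xu le] := ideal_ae hX (mu_ n) (X0 hX) h1'.
  by apply/eqP; rewrite eq_le (Nge0 hX Xu) andbT -(N0 hX).
rewrite (_ : (fun n => N (u n)) = fun=> 0); first exact: cvg_cst.
by apply/funext => n; rewrite h.
Qed.

Lemma Xa_le {x y} : Xa mu X N x -> measurable_fun setT y ->
  {ae mu, forall t, `|y t| <= `|x t|} -> Xa mu X N y.
Proof.
move=> [Xx ocx] my hyx; split; first by have [] := ideal_ae hX my Xx hyx.
move=> u mu_ h1 h2 h3; apply: ocx => //.
apply: filterS2 h1 hyx => t h1 hyx n.
by have /andP[a b] := h1 n; rewrite a /=; exact: le_trans hyx.
Qed.

Lemma Xa_add {x y} : Xa mu X N x -> Xa mu X N y -> Xa mu X N (x \+ y).
Proof.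
move=> [Xx ocx] [Xy ocy]; split; first by have := XD hX Xx Xy.
move=> u mu_ h1 h2 h3.
pose a n t := Num.min (u n t) `|x t|.
pose b n t := Num.max (u n t - `|x t|) 0.
have ma n : measurable_fun setT (a n).
  by apply: measurable_minr; [exact: mu_ | exact: mnorm (XL0 hX Xx)].
have mb n : measurable_fun setT (b n).
  apply: measurable_maxr; last exact: measurable_cst.
  by apply: measurable_funB; [exact: mu_ | exact: mnorm (XL0 hX Xx)].
have ha : {ae mu, forall t n, 0 <= a n t <= `|x t|}.
  apply: filterS h1 => t h n; rewrite /a le_min ge_min lexx orbT andbT.
  by have /andP[-> _] := h n; rewrite normr_ge0.
have hb : {ae mu, forall t n, 0 <= b n t <= `|y t|}.
  apply: filterS h1 => t h n; rewrite /b le_max lexx orbT /= ge_max normr_ge0 andbT.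
  have /andP[_ c] := h n; have := ler_normD (x t) (y t); lra.
have Na : (fun n => N (a n)) @ \oo --> (0:R).
  apply: ocx => //.
  - apply: filterS h2 => t h n; rewrite /a le_min !ge_min lexx orbT andbT.
    by rewrite h.
  - apply: filterS2 h1 h3 => t h1 h3; apply: (@cvg0_le _ (fun n => u n t)) => //.
    move=> n; rewrite /a le_min ge_min lexx /=; have /andP[-> _] := h1 n.
    by rewrite normr_ge0.
have Nb : (fun n => N (b n)) @ \oo --> (0:R).
  apply: ocy => //.
  - apply: filterS h2 => t h n; rewrite /b ge_max !le_max lexx !orbT andbT lerD2r h //.
  - apply: filterS2 h1 h3 => t h1 h3; apply: (@cvg0_le _ (fun n => u n t)) => //.
    move=> n; rewrite /b le_max lexx orbT /= ge_max; have /andP[c _] := h1 n.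
    apply/andP; split; last exact: c. by have := normr_ge0 (x t); lra.
have Xa' n : X (a n).
  have h' : {ae mu, forall t, `|a n t| <= `|x t|}.
    by apply: filterS ha => t /(_ n) /andP[c' e]; rewrite (ger0_norm c').
  by have [] := ideal_ae hX (ma n) Xx h'.
have Xb' n : X (b n).
  have h' : {ae mu, forall t, `|b n t| <= `|y t|}.
    by apply: filterS hb => t /(_ n) /andP[c' e]; rewrite (ger0_norm c').
  by have [] := ideal_ae hX (mb n) Xy h'.
have uab n : u n = a n \+ b n.
  apply/funext => t; rewrite /a /b /=.
  case: (leP (u n t) `|x t|) => h; case: (leP (u n t - `|x t|) 0) => h'; lra.
apply: (@squeeze_cvgr _ _ _ _ (fun=> 0) (fun n => N (a n) + N (b n))).
- near=> n; rewrite (Nge0 hX (_ : X (u n))) /=; last first.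
    by rewrite uab; have := XD hX (Xa' n) (Xb' n).
  by rewrite uab; have := Ntri hX (Xa' n) (Xb' n).
- exact: cvg_cst.
- by rewrite -[X in _ --> X](addr0 0); exact: cvgD.
Unshelve. all: by end_near.
Qed.

Lemma Xa_scale (c : R) {x} : Xa mu X N x -> Xa mu X N (fun t => c * x t).
Proof.
move=> hx; have [-> | c0] := eqVneq c 0.
  have H := @Xa_le _ (fun t => 0 * x t) Xa0; apply H.
    by apply: mscale; case: hx => Xx _; exact (XL0 hX Xx).
  by apply: aeW => t; rewrite mul0r normr0.
case: hx => Xx ocx; split; first exact (XZ hX c Xx).
move=> u mu_ h1 h2 h3.
have cn0 : `|c| != 0 by rewrite normr_eq0.
pose v n t := `|c|^-1 * u n t.
have hv : {ae mu, forall t n, 0 <= v n t <= `|x t|}.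
  apply: filterS h1 => t h n; have /andP[e f] := h n.
  rewrite /v mulr_ge0 ?invr_ge0 ?normr_ge0 //= ler_pdivrMl ?normr_gt0 //.
  by rewrite -normrM.
have mv n : measurable_fun setT (v n) by exact: (mscale _ (mu_ n)).
have Xv n : X (v n).
  have h' : {ae mu, forall t, `|v n t| <= `|x t|}.
    by apply: filterS hv => t /(_ n) /andP[c' e]; rewrite (ger0_norm c').
  by have [] := ideal_ae hX (mv n) Xx h'.
have Nv : (fun n => N (v n)) @ \oo --> (0:R).
  apply: ocx => //.
  - apply: filterS h2 => t h n; rewrite /v ler_pM2l ?invr_gt0 ?normr_gt0 //.
  - apply: filterS h3 => t h; rewrite -(mulr0 `|c|^-1); exact: cvgMr.
have -> : (fun n => N (u n)) = (fun n => `|c| * N (v n)).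
  apply/funext => n; rewrite -[in RHS](normr_id c) -(Nhom hX _ (Xv n)); congr N; apply/funext => t.
  by rewrite /v mulrA mulfV // mul1r.
by rewrite -(mulr0 `|c|); exact: cvgMr.
Qed.

End Xa_lemmas.

Lemma mlt0 {d} {T : measurableType d} {R : realType} (h : T -> R) :
  measurable_fun setT h -> measurable [set t | 0 < h t].
Proof.
move=> mh; have := mh measurableT _ (measurable_itv `]0, +oo[).
rewrite setTI; congr measurable; apply/seteqP; split => t /=;
  by rewrite in_itv /= andbT.
Qed.

Lemma linf_norm_eq {R : realType} (a : nat -> R) (M : R) :
  (forall n, `|a n| <= M) -> (exists n, `|a n| = M) -> linf_norm a = M.
Proof.
move=> hub [n0 hn0]; apply/eqP; rewrite eq_le; apply/andP; split.
  by apply: ge_sup; [exists `|a n0|; exists n0 | move=> _ [n _ <-]].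
rewrite -hn0; apply: ub_le_sup; last by exists n0.
by exists M => _ [n _ <-].
Qed.

Section Forward.
Context {d : measure_display} {T : measurableType d} {R : realType}
  {mu : {measure set T -> \bar R}} {X : set (T -> R)} {N : (T -> R) -> R}
  (hX : banach_ideal_space mu X N).

Lemma XB {f g : T -> R} : X f -> X g -> X (f \- g).
Proof.
move=> Xf Xg; have := XD hX Xf (XZ hX (-1) Xg).
by congr X; apply/funext => t /=; rewrite mulN1r.
Qed.

Lemma forward : contains_lattice_isometric_linf mu X N ->
  exists f, X f /\ N f = 1 /\ distX N f (Xa mu X N) = 1.
Proof.
case=> J [hJX hJlin hJnorm hJmax hJmin].
pose one := fun _ : nat => (1:R).
pose zero := fun _ : nat => (0:R).
pose delta (k : nat) := fun n : nat => if n == k then (1:R) else 0.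
have lone : linf one by exists 1 => n; rewrite normr1.
have lzero : linf zero by exists 0 => n; rewrite normr0.
have ldelta k : linf (delta k).
  by exists 1 => n; rewrite /delta; case: (n == k); rewrite ?normr1 ?normr0.
have nor1 : linf_norm one = 1.
  by apply: linf_norm_eq => [n|]; [rewrite normr1 | exists 0%N; rewrite normr1].
have nord k : linf_norm (delta k) = 1.
  apply: linf_norm_eq => [n|]; last by exists k; rewrite /delta eqxx normr1.
  by rewrite /delta; case: (n == k); rewrite ?normr1 ?normr0.
pose f := J one.
pose fk k := J (delta k).
have J0 : {ae mu, forall t, J zero t = 0}.
  apply: filterS (hJlin 1 zero zero lzero lzero) => t.
  rewrite (_ : (fun n => 1 * zero n + zero n) = zero); last first.
    by apply/funext => n; rewrite /zero mul1r addr0.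
  by rewrite mul1r => h; lra.
have hpos : {ae mu, forall t k, 0 <= fk k t}.
  apply: ae_foralln => k.
  apply: filterS2 (hJmax _ _ (ldelta k) lzero) J0 => t.
  rewrite (_ : (fun n => Num.max (delta k n) (zero n)) = delta k); last first.
    apply/funext => n; rewrite /delta /zero; case: (n == k) => //.
      by rewrite max_l.
    by rewrite maxxx.
  by move=> h1 h2; rewrite /fk h1 h2 le_max lexx orbT.
have hle : {ae mu, forall t k, fk k t <= f t}.
  apply: ae_foralln => k.
  apply: filterS (hJmax _ _ lone (ldelta k)) => t.
  rewrite (_ : (fun n => Num.max (one n) (delta k n)) = one); last first.
    apply/funext => n; rewrite /delta /one; case: (n == k); first by rewrite maxxx.
    by rewrite max_l.
  by rewrite -/f -/(fk k) => ->; rewrite le_max lexx orbT.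
have hdis : {ae mu, forall t j k, j != k -> fk j t = 0 \/ fk k t = 0}.
  have J0p : {ae mu, forall t, J zero t = 0 /\ (forall k, 0 <= fk k t)}.
    by apply: filterS2 J0 hpos => t a b.
  apply: ae_foralln => j; apply: ae_foralln => k.
  apply: filterS2 (hJmin _ _ (ldelta j) (ldelta k)) J0p => t.
  move=> hm [h0 hp] jk.
  rewrite (_ : (fun n => Num.min (delta j n) (delta k n)) = zero) in hm; last first.
    apply/funext => n; rewrite /delta /zero.
    case: eqP => [->|_]; first by rewrite (negbTE jk) min_r.
    by case: (n == k); rewrite ?min_l ?minxx.
  move: hm; rewrite h0 => /esym; have := hp j; have := hp k.
  rewrite /fk; case: (leP (J (delta j) t) (J (delta k) t)) => _ a b ->; [left|right] => //.
have Xf : X f by exact: hJX.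
have Xfk k : X (fk k) by exact: hJX.
have Nf : N f = 1 by rewrite /f hJnorm.
have Nfk k : N (fk k) = 1 by rewrite /fk hJnorm.
have key : forall g, Xa mu X N g -> 1 <= N (f \- g).
  move=> g [Xg ocg].
  pose E n := [set t | exists k, (n <= k)%N /\ 0 < fk k t].
  have mE n : measurable (E n).
    rewrite (_ : E n = \bigcup_(k in [set k | (n <= k)%N]) [set t | 0 < fk k t]).
      apply: bigcup_measurable => k _; apply: mlt0; exact: (XL0 hX (Xfk k)).
    by apply/seteqP; split => t /=; [case=> k [hk1 hk2] | case=> k hk1 hk2]; exists k.
  pose u n t := \1_(E n) t * `|g t|.
  have mu_ n : measurable_fun setT (u n).
    by apply: measurable_funM; [exact: measurable_indic | exact: mnorm (XL0 hX Xg)].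
  have u_ge0 n t : 0 <= u n t by rewrite /u mulr_ge0.
  have u_le n t : u n t <= `|g t|.
    rewrite /u indicE; case: (_ \in _); rewrite ?mul1r ?mul0r //.
  have Xu n : X (u n).
    by have [] := ideal hX (mu_ n) Xg (fun t => ltac:(rewrite ger0_norm //; exact: u_le)).
  have Nu : (fun n => N (u n)) @ \oo --> (0:R).
    apply: ocg => //.
    - by apply: aeW => t n; rewrite u_ge0 u_le.
    - apply: aeW => t n; rewrite /u !indicE.
      case: (boolP (t \in E n.+1)) => h; last by rewrite mul0r mulr_ge0.
      have : t \in E n.
        move: h; rewrite !inE => -[k [hk1 hk2]]; exists k; split => //.
        exact: ltnW.
      by move=> ->.
    - apply: filterS2 hdis hpos => t hd hp.
      have [[k hk]|nk] := pselect (exists k, 0 < fk k t).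
        apply: cvg_near_cst; exists k.+1 => // n /= hn.
        rewrite /u indicE memNset ?mul0r // => -[k' [hk1 hk2]].
        have : k' != k by apply/eqP => ek; move: hn; rewrite -ek ltnNge hk1.
        by move=> /hd[] h; [move: hk2 | move: hk]; rewrite h ltxx.
      apply: cvg_near_cst; apply: nearW => n.
      rewrite /u indicE memNset ?mul0r // => -[k' [_ hk2]]; apply: nk; by exists k'.
  have ineq n : 1 <= N (f \- g) + N (u n).
    pose w t := Num.max (fk n t - u n t) 0.
    have mw : measurable_fun setT w.
      apply: measurable_maxr; last exact: measurable_cst.
      by apply: measurable_funB; [exact: (XL0 hX (Xfk n)) | exact: mu_].
    have Xfg : X (f \- g) by exact: XB.
    have [Xw Nw] : X w /\ N w <= N (f \- g).
      apply: (ideal_ae hX mw Xfg).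
      apply: filterS2 hpos hle => t hp hl.
      rewrite ger0_norm /w; last by rewrite le_max lexx orbT.
      rewrite ge_max normr_ge0 andbT.
      have [fp|fn] := ltP 0 (fk n t).
        have -> : u n t = `|g t|.
          by rewrite /u indicE mem_set ?mul1r //; exists n.
        have := hl n; have := ler_norm (g t); have := ler_norm (f t - g t); lra.
      have := hp n; have := u_ge0 n t; have := normr_ge0 (f t - g t); lra.
    have [_ Nle] : X (fk n) /\ N (fk n) <= N (w \+ u n).
      apply: (ideal_ae hX (XL0 hX (Xfk n)) (XD hX Xw (Xu n))).
      apply: filterS hpos => t hp.
      rewrite (ger0_norm (hp n)) ger0_norm /w; last first.
        by rewrite addr_ge0 ?u_ge0 // le_max lexx orbT.
      have := u_ge0 n t; rewrite /=; case: (leP (fk n t - u n t) 0); lra.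
    have := Ntri hX Xw (Xu n); rewrite Nfk in Nle; lra.
  rewrite leNgt; apply/negP => lt1.
  have e0 : 0 < 1 - N (f \- g) by rewrite subr_gt0.
  have := (cvgrPdist_lt _ _).1 Nu _ e0.
  case=> M _ /(_ M (leqnn M)) /=; rewrite sub0r normrN (ger0_norm (Nge0 hX (Xu M))).
  have := ineq M; lra.
exists f; split => //; split => //.
have X0a := Xa0 hX.
have eq0 : N (f \- (fun _ => 0)) = 1.
  by rewrite -Nf; congr N; apply/funext => t /=; rewrite subr0.
rewrite /distX; apply/eqP; rewrite eq_le; apply/andP; split.
  rewrite -[X in _ <= X]eq0; apply: ge_inf; last by exists (fun _ => 0).
  by exists 0 => _ [m [Xm _] <-]; exact: (Nge0 hX (XB Xf Xm)).
apply: lb_le_inf; first by exists 1, (fun _ => 0).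
by move=> _ [m hm <-]; exact: key.
Qed.

End Forward.

Lemma indic1 {T : Type} {R : realType} (A : set T) t : A t -> \1_A t = 1 :> R.
Proof. by move=> h; rewrite indicE mem_set. Qed.

Lemma indic0 {T : Type} {R : realType} (A : set T) t : ~ A t -> \1_A t = 0 :> R.
Proof. by move=> h; rewrite indicE memNset. Qed.

Lemma mle {d} {T : measurableType d} {R : realType} (h1 h2 : T -> R) :
  measurable_fun setT h1 -> measurable_fun setT h2 -> measurable [set t | h1 t <= h2 t].
Proof.
move=> m1 m2; have := measurable_funB m2 m1 measurableT (measurable_itv `[0, +oo[).
rewrite setTI; congr measurable; apply/seteqP; split => t /=;
  by rewrite in_itv /= andbT subr_ge0.
Qed.

Lemma mneq0 {d} {T : measurableType d} {R : realType} (h : T -> R) :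
  measurable_fun setT h -> measurable [set t | h t = 0].
Proof.
move=> m; have := m measurableT _ (measurable_set1 (0:R)).
by rewrite setTI.
Qed.

Section Exhaust.
Context {d : measure_display} {T : measurableType d} {R : realType}
  {mu : {measure set T -> \bar R}} {X : set (T -> R)} {N : (T -> R) -> R}
  (hX : banach_ideal_space mu X N).

Definition good (f : T -> R) (B : set T) :=
  measurable B /\ Xa mu X N (fun t => \1_B t * `|f t|).

Lemma good0 f : X f -> good f set0.
Proof.
move=> Xf; split => //; apply: (Xa_le hX (Xa0 hX)).
  by apply: measurable_funM; [exact: measurable_indic | exact: (mnorm (XL0 hX Xf))].
by apply: aeW => t; rewrite indic0 // mul0r normr0.
Qed.

Lemma goodU f B C : X f -> good f B -> good f C -> good f (B `|` C).
Proof.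
move=> Xf [mB hB] [mC hC]; split; first exact: measurableU.
apply: (Xa_le hX (Xa_add hX hB hC)).
  apply: measurable_funM; last exact: (mnorm (XL0 hX Xf)).
  by apply: measurable_indic; exact: measurableU.
apply: aeW => t /=.
have [bt|bt] := pselect (B t); have [ct|ct] := pselect (C t).
- rewrite (@indic1 _ R (B `|` C) t); last by left.
  rewrite (@indic1 _ R _ t bt) (@indic1 _ R _ t ct) !mul1r normr_id.
  apply: le_trans (ler_norm _).
  have := normr_ge0 (f t); lra.
- rewrite (@indic1 _ R (B `|` C) t); last by left.
  by rewrite (@indic1 _ R _ t bt) (@indic0 _ R _ t ct) mul1r mul0r addr0.
- rewrite (@indic1 _ R (B `|` C) t); last by right.
  by rewrite (@indic0 _ R _ t bt) (@indic1 _ R _ t ct) mul1r mul0r add0r.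
- rewrite (@indic0 _ R (B `|` C) t); last by case.
  by rewrite mul0r normr0 normr_ge0.
Qed.

Lemma ereal_small (a w s : \bar R) (e : R) : a \is a fin_num -> w \is a fin_num ->
  s \is a fin_num -> (a + w <= s)%E -> (s - e%:E < a)%E -> fine w < e.
Proof.
move=> ha hw hs; rewrite -(fineK ha) -(fineK hw) -(fineK hs) -EFinD -EFinB.
rewrite lee_fin lte_fin /=; lra.
Qed.

Lemma fin_between (x y : \bar R) : (0 <= x)%E -> (x <= y)%E -> (y < +oo)%E ->
  x \is a fin_num.
Proof. by move=> h0 h1 h2; rewrite ge0_fin_numE // (le_lt_trans h1 h2). Qed.

Lemma small_eq0 (w : R) : 0 <= w -> (forall n : nat, w < n.+1%:R^-1) -> w = 0.
Proof.
move=> w0 h; apply/eqP; rewrite eq_le w0 andbT leNgt; apply/negP => wp.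
have := h (Num.trunc w^-1); have := truncnS_gt w^-1.
set m := (Num.trunc w^-1).+1%:R => h1 h2.
have m0 : 0 < m by rewrite /m ltr0Sn.
move: h1 h2; rewrite -[w^-1]div1r -[m^-1]div1r ltr_pdivrMr // ltr_pdivlMr // mulrC; lra.
Qed.

Lemma exhaust (mu_sigma : sigma_finite setT mu)
  (hsupp : same_support mu (Xa mu X N) X) f (Xf : X f) :
  exists G : nat -> set T, (forall i, good f (G i)) /\ {ae mu, forall t, f t != 0 -> exists i, G i t}.
Proof.
case: mu_sigma => F FU hF.
have mF j : measurable (F j) := (hF j).1.
have Ffin j : (mu (F j) < +oo)%E := (hF j).2.
pose S j := [set mu (B `&` F j) | B in good f].
pose s j := ereal_sup (S j).
have s_ge0 j : (0 <= s j)%E.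
  apply: ereal_sup_ubound; exists set0; first exact: good0.
  by rewrite set0I measure0.
have s_le j : (s j <= mu (F j))%E.
  apply: ge_ereal_sup => _ [B [mB _] <-]; apply: le_measure; rewrite ?inE //;
    by [exact: measurableI | exact: subIsetr].
have s_fin j : s j \is a fin_num by exact: fin_between (s_le j) (Ffin j).
have choose j n : exists B, good f B /\ (s j - (n.+1%:R^-1)%:E < mu (B `&` F j))%E.
  have : (s j - (n.+1%:R^-1)%:E < s j)%E.
    rewrite -(fineK (s_fin j)) -EFinB lte_fin.
    have h : 0 < n.+1%:R^-1 :> R by rewrite invr_gt0 ltr0Sn.
    by rewrite gtrDl oppr_lt0.
  by move/ereal_sup_gt => [_ [B gB <-] h]; exists B.
pose BB j n := projT1 (cid (choose j n)).
have hBB j n : good f (BB j n) /\ (s j - (n.+1%:R^-1)%:E < mu (BB j n `&` F j))%E.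
  exact: (projT2 (cid (choose j n))).
pose G i := if @unpickle (prod nat nat) i is Some (j, n) then BB j n else set0.
have gG i : good f (G i).
  by rewrite /G; case: unpickle => [[j n]|]; [exact: (hBB j n).1 | exact: good0].
have GBB j n : G (pickle (j, n)) = BB j n by rewrite /G pickleK.
exists G; split => //.
pose U := \bigcup_i G i.
have mU : measurable U by apply: bigcupT_measurable => i; exact: (gG i).1.
have mf := XL0 hX Xf.
pose Bset := U `|` [set t | f t = 0].
have mBset : measurable Bset by apply: measurableU => //; exact: mneq0.
case: hsupp => A [[mA hA1 hA2] [_ hX1 _]].
have key : forall g, Xa mu X N g -> {ae mu, forall t, ~ Bset t -> g t = 0}.
  move=> g hg; have mg := XL0 hX hg.1.
  pose V (m : nat) := [set t | `|f t| <= m%:R * `|g t|].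
  have mV m : measurable (V m).
    by apply: mle; [exact: (mnorm mf) | exact: (mscale _ (mnorm mg))].
  have gV m : good f (V m).
    split => //; apply: (Xa_le hX (Xa_scale hX m%:R hg)).
      apply: measurable_funM; last exact: (mnorm mf).
      exact: measurable_indic.
    apply: aeW => t; have [vt|vt] := pselect (V m t).
      by rewrite (@indic1 _ R _ t vt) mul1r normr_id normrM (ger0_norm (ler0n _ _)).
    by rewrite (@indic0 _ R _ t vt) mul0r normr0.
  pose W j m := F j `&` V m `&` ~` U.
  have mW j m : measurable (W j m).
    by apply: measurableI; [apply: measurableI | exact: measurableC].
  have W0 j m : mu (W j m) = 0.
    have w_ge0 : (0 <= mu (W j m))%E by exact: measure_ge0.
    have w_le : (mu (W j m) <= mu (F j))%E.
      by apply: le_measure; rewrite ?inE // => t [[]].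
    have w_fin : mu (W j m) \is a fin_num by exact: fin_between w_le (Ffin j).
    rewrite -(fineK w_fin); congr EFin; apply: small_eq0; first exact: fine_ge0.
    move=> n; have [gB hlt] := hBB j n.
    have gBV := goodU _ _ _ Xf gB (gV m).
    have h1 : (mu ((BB j n `|` V m) `&` F j) <= s j)%E.
      by apply: ereal_sup_ubound; exists (BB j n `|` V m).
    have mB : measurable (BB j n) := gB.1.
    have h2 : (mu (BB j n `&` F j) + mu (W j m) <= mu ((BB j n `|` V m) `&` F j))%E.
      rewrite -measureU //; first last.
      - apply/seteqP; split => // t [[Bt _] [_ nU]]; apply: nU.
        exists (pickle (j, n)); first by []. by rewrite GBB.
      - exact: measurableI.
      apply: le_measure; rewrite ?inE //.
      - by apply: measurableU => //; exact: measurableI.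
      - by apply: measurableI => //; exact: measurableU.
      - by move=> t [[Bt Ft] | [[Ft Vt] _]]; split => //; [left | right].
    have a_fin : mu (BB j n `&` F j) \is a fin_num.
      apply: fin_between (Ffin j); first exact: measure_ge0.
      by apply: le_measure; rewrite ?inE //; by [exact: measurableI | exact: subIsetr].
    exact: ereal_small a_fin w_fin (s_fin j) (le_trans h2 h1) hlt.
  apply: (@negligibleS _ _ _ mu (\bigcup_j \bigcup_m W j m)).
    move=> t /= /not_implyP [nB gt].
    have : [set: T] t by [].
    rewrite FU => -[j _ Fj].
    have ft : f t != 0 by apply/eqP => f0; apply: nB; right.
    have gt0 : 0 < `|g t| by rewrite normr_gt0; apply/eqP.
    exists j => //; exists (Num.trunc (`|f t| / `|g t|)).+1 => //.
    split; [split => // | by move=> Ut; apply: nB; left].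
    rewrite /V /= -ler_pdivrMr //; apply: ltW; exact: truncnS_gt.
  apply: negligible_bigcup => j; apply: negligible_bigcup => m.
  by apply/negligibleP => //; exact: W0.
have nul := hA2 Bset mBset key.
have aeA := hX1 f Xf.
have aeD : {ae mu, forall t, ~ (A `\` Bset) t}.
  exists (A `\` Bset); split => //; first exact: measurableD.
  by move=> t /= /contrapT.
apply: filterS2 aeA aeD => t h1 h2 ft.
have At : A t by apply: contrapT => nA; move/eqP: ft; apply; exact: h1.
have : Bset t by apply: contrapT => nB; apply: h2; split.
by case => [[i _ Gi] | f0]; [exists i | move/eqP: ft].
Qed.

End Exhaust.

Lemma logn_fiber k M : logn 2 (2 ^ k * (M.*2.+1)) = k.
Proof.
rewrite lognM ?expn_gt0 // pfactorK // logn_coprime ?addn0 //.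
by rewrite coprime2n /= odd_double.
Qed.

Lemma fiber_ge k M : (M <= 2 ^ k * (M.*2.+1))%N.
Proof.
have := expn_gt0 2 k; rewrite /= -addnn; set p := (2 ^ k)%N; nia.
Qed.

Lemma max_mulr {R : realType} (x y z : R) : 0 <= z ->
  Num.max x y * z = Num.max (x * z) (y * z).
Proof.
move=> z0; case: (leP x y) => h; case: (leP (x * z) (y * z)) => h' //.
  by have := ler_wpM2r z0 h; lra.
by have := ler_wpM2r z0 (ltW h); lra.
Qed.

Lemma min_mulr {R : realType} (x y z : R) : 0 <= z ->
  Num.min x y * z = Num.min (x * z) (y * z).
Proof.
move=> z0; case: (leP x y) => h; case: (leP (x * z) (y * z)) => h' //.
  by have := ler_wpM2r z0 h; lra.
by have := ler_wpM2r z0 (ltW h); lra.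
Qed.

Lemma le_approx {R : realType} (x y : R) : 0 <= x ->
  (forall M : nat, x * (1 - M.+1%:R^-1) <= y) -> x <= y.
Proof.
move=> x0 h; rewrite leNgt; apply/negP => yx.
have dp : 0 < x - y by rewrite subr_gt0.
pose M := Num.trunc (x / (x - y)).
have := h M; have := truncnS_gt (x / (x - y)); rewrite -/M.
set m := M.+1%:R => h1 h2.
have m0 : 0 < m by rewrite /m ltr0Sn.
move: h1; rewrite ltr_pdivrMr // => h1.
have : x * (1 - m^-1) = x - x / m by rewrite mulrBr mulr1.
move=> e; rewrite e in h2.
have : x / m < x - y by rewrite ltr_pdivrMr // mulrC.
move=> hh; clear h1 e; clearbody m; lra.
Qed.

Section Construct.
Context {d : measure_display} {T : measurableType d} {R : realType}
  {mu : {measure set T -> \bar R}} {X : set (T -> R)} {N : (T -> R) -> R}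
  (hX : banach_ideal_space mu X N).
Variables (f : T -> R) (Xf : X f) (Nf : N f = 1) (P : nat -> set T)
  (mP : forall i, measurable (P i))
  (disjP : forall i j t, P i t -> P j t -> i = j)
  (hP : forall i, 1 - i.+1%:R^-1 < N (fun t => \1_(P i) t * `|f t|)).
Implicit Types (a b : nat -> R).

Let Q := \bigcup_i P i.
Let mQ : measurable Q. Proof. exact: bigcupT_measurable. Qed.
Let idx t := xget 0%N [set i | P i t].
Let idxE {i t} : P i t -> idx t = i.
Proof. by move=> h; apply: xget_unique => // j hj; exact: disjP hj h. Qed.
Let idx0 t : ~ Q t -> idx t = 0%N.
Proof. by move=> h; apply: xgetPN => i hi; apply: h; exists i. Qed.
Let mf : measurable_fun setT f. Proof. exact: (XL0 hX Xf). Qed.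
Let Fq t := \1_Q t * `|f t|.
Let mFq : measurable_fun setT Fq.
Proof. by apply: measurable_funM; [exact: measurable_indic | exact: (mnorm mf)]. Qed.
Let Fq_ge0 t : 0 <= Fq t. Proof. by rewrite /Fq mulr_ge0. Qed.
Let Fq_le t : Fq t <= `|f t|.
Proof.
rewrite /Fq indicE; case: (_ \in _); rewrite ?mul1r ?mul0r //.
Qed.

Let midx (h : nat -> R) : measurable_fun setT (fun t => h (idx t)).
Proof.
move=> _ Y mY; rewrite setTI.
rewrite (_ : _ @^-1` Y = \bigcup_(i in [set i | Y (h i)]) P i `|`
   (~` Q `&` [set _ | Y (h 0%N)])).
  apply: measurableU; first by apply: bigcup_measurable => i _; exact: mP.
  apply: measurableI; first exact: measurableC.
  by have [y|y] := pselect (Y (h 0%N)); [rewrite (_ : [set _ | _] = setT) //|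
    rewrite (_ : [set _ | _] = set0) //]; apply/seteqP; split.
apply/seteqP; split => t /=.
  have [[i _ Pit]|nQ] := pselect (Q t).
    by rewrite (idxE Pit) => Yi; left; exists i.
  by rewrite idx0 // => Y0; right.
case=> [[i Yi Pit]|[nQ Y0]]; first by rewrite (idxE Pit).
by rewrite idx0.
Qed.

Definition kf (i : nat) := logn 2 i.

Let J (a : nat -> R) := fun t => a (kf (idx t)) * Fq t.

Let mJ a : measurable_fun setT (J a).
Proof. by apply: measurable_funM; [exact: (midx (fun i => a (kf i))) | exact: mFq]. Qed.

Let linf_bound {a} : linf a -> forall n, `|a n| <= linf_norm a.
Proof.
move=> [C hC] n; apply: ub_le_sup; last by exists n.
by exists C => _ [m _ <-].
Qed.

Let linf_ge0 {a} : linf a -> 0 <= linf_norm a.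
Proof. by move=> la; exact: le_trans (normr_ge0 _) (linf_bound la 0%N). Qed.

Let J_le {a} : linf a -> forall t, `|J a t| <= `|linf_norm a * f t|.
Proof.
move=> la t; rewrite /J normrM (ger0_norm (Fq_ge0 t)) normrM (ger0_norm (linf_ge0 la)).
apply: ler_pM => //; exact: linf_bound.
Qed.

Let XJ {a} : linf a -> X (J a) /\ N (J a) <= N (fun t => linf_norm a * f t).
Proof. move=> la; exact: (ideal hX (mJ a) (XZ hX _ Xf) (J_le la)). Qed.

Let NJ a : linf a -> N (J a) = linf_norm a.
Proof.
move=> la; have [XJa leJ] := XJ la.
apply/eqP; rewrite eq_le; apply/andP; split.
  by move: leJ; rewrite (Nhom hX _ Xf) Nf mulr1 ger0_norm //; exact: linf_ge0.
apply: ge_sup; first by exists `|a 0%N|, 0%N.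
move=> _ [k _ <-]; apply: le_approx => // M.
pose i := (2 ^ k * (M.*2.+1))%N.
have ki : kf i = k by exact: logn_fiber.
pose v t := `|a k| * (\1_(P i) t * `|f t|).
have mv : measurable_fun setT v.
  apply: mscale; apply: measurable_funM; [exact: measurable_indic | exact: (mnorm mf)].
have hvJ t : `|v t| <= `|J a t|.
  rewrite /v /J; have [Pit|nP] := pselect (P i t).
    rewrite (idxE Pit) ki /Fq (@indic1 _ R Q t); last by exists i.
    by rewrite (@indic1 _ R _ t Pit) !mul1r !normrM !normr_id.
  by rewrite (@indic0 _ R _ t nP) mul0r mulr0 normr0.
have [Xv Nv] := ideal hX mv XJa hvJ.
apply: le_trans Nv.
have Xpi : X (fun t => \1_(P i) t * `|f t|).
  have mpi : measurable_fun setT (fun t => \1_(P i) t * `|f t|).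
    by apply: measurable_funM; [exact: measurable_indic | exact: (mnorm mf)].
  have hle t : `|\1_(P i) t * `|f t| | <= `|f t|.
    rewrite normrM normr_id indicE.
    by case: (_ \in _); rewrite ?normr1 ?normr0 ?mul1r ?mul0r.
  by have [] := ideal hX mpi Xf hle.
rewrite /v (Nhom hX _ Xpi) normr_id; apply: ler_wpM2l => //.
have := hP i; have : i.+1%:R^-1 <= M.+1%:R^-1 :> R.
  rewrite lef_pV2 ?posrE ?ltr0Sn // ler_nat ltnS; exact: fiber_ge.
move=> h1 h2; move: h1 h2; set p := i.+1%:R^-1; set q := M.+1%:R^-1; clearbody p q => h1 h2; lra.
Qed.

Lemma construct : contains_lattice_isometric_linf mu X N.
Proof.
exists J; split.
- by move=> a la; have [] := XJ la.
- move=> c a b la lb; apply: aeW => t; rewrite /J mulrDl mulrA //.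
- exact: NJ.
- by move=> a b la lb; apply: aeW => t; rewrite /J max_mulr.
- by move=> a b la lb; apply: aeW => t; rewrite /J min_mulr.
Qed.

End Construct.

Lemma indic_abs_le {T : Type} {R : realType} (A : set T) (g : T -> R) t :
  `|\1_A t * `|g t| | <= `|g t|.
Proof.
rewrite normrM normr_id indicE.
by case: (_ \in _); rewrite ?normr1 ?normr0 ?mul1r ?mul0r.
Qed.

Section Back.
Context {d : measure_display} {T : measurableType d} {R : realType}
  {mu : {measure set T -> \bar R}} {X : set (T -> R)} {N : (T -> R) -> R}
  (hX : banach_ideal_space mu X N).

Lemma backward (mu_sigma : sigma_finite setT mu) (hfatou : semi_fatou mu X N)
  (hsupp : same_support mu (Xa mu X N) X) :
  (exists f, X f /\ N f = 1 /\ distX N f (Xa mu X N) = 1) ->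
  contains_lattice_isometric_linf mu X N.
Proof.
case=> f [Xf [Nf hd]].
have mf : measurable_fun setT f := XL0 hX Xf.
have hdist m : Xa mu X N m -> 1 <= N (f \- m).
  move=> hm; rewrite -hd; apply: ge_inf; last by exists m.
  by exists 0 => _ [m' hm' <-]; exact: (Nge0 hX (XB hX Xf hm'.1)).
have mind B : measurable B -> measurable_fun setT (fun t => \1_B t * `|f t|).
  by move=> mB; apply: measurable_funM; [exact: measurable_indic | exact: (mnorm mf)].
have Xind B : measurable B -> X (fun t => \1_B t * `|f t|).
  by move=> mB; have [] := ideal hX (mind B mB) Xf (fun t => indic_abs_le B f t).
have compl B : good (mu:=mu) (X:=X) (N:=N) f B ->
    N (fun t => \1_(~` B) t * `|f t|) = 1.
  move=> [mB hB].
  pose m t := \1_B t * f t.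
  have mm : measurable_fun setT m.
    by apply: measurable_funM; [exact: measurable_indic | exact: mf].
  have Xam : Xa mu X N m.
    apply: (Xa_le hX hB mm); apply: aeW => t.
    by rewrite /m !normrM normr_id.
  have e : N (fun t => \1_(~` B) t * `|f t|) = N (f \- m).
    apply: (N_eq hX (mind _ (measurableC mB)) (XB hX Xf Xam.1)) => t.
    rewrite /m /=; have [Bt|nBt] := pselect (B t).
      rewrite (@indic0 _ R (~` B) t) ?(@indic1 _ R B t) // ?mul0r ?mul1r ?subrr ?normr0 //.
    rewrite (@indic1 _ R (~` B) t) ?(@indic0 _ R B t) // mul0r mul1r subr0 normr_id //.
  apply/eqP; rewrite eq_le; apply/andP; split.
    rewrite -Nf; have [] := ideal hX (mind _ (measurableC mB)) Xf (fun t => indic_abs_le _ f t).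
    by [].
  by rewrite e; exact: hdist.
have [G [gG aeG]] := exhaust hX mu_sigma hsupp f Xf.
pose C m := [set t | exists2 i, (i <= m)%N & G i t].
have gC m : good (mu:=mu) (X:=X) (N:=N) f (C m).
  elim: m => [|m IH].
    rewrite (_ : C 0%N = G 0%N); first exact: gG.
    apply/seteqP; split => t /=; last by exists 0%N.
    by case=> i; rewrite leqn0 => /eqP ->.
  rewrite (_ : C m.+1 = C m `|` G m.+1); first exact: (goodU hX _ _ _ Xf IH (gG _)).
  apply/seteqP; split => t /=.
    case=> i; rewrite leq_eqVlt => /orP[/eqP -> | ]; first by right.
    by rewrite ltnS => im Gi; left; exists i.
  case=> [[i im Gi]|Gm]; last by exists m.+1.
  by exists i => //; exact: leqW.
have mC m : measurable (C m) := (gC m).1.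
have Cmono m m' : (m <= m')%N -> C m `<=` C m'.
  by move=> mm' t [i im Gi]; exists i => //; exact: leq_trans mm'.
have sel p (i : nat) : exists q, (p <= q)%N /\
    1 - i.+1%:R^-1 < N (fun t => \1_(C q `\` C p) t * `|f t|).
  pose u k t := \1_(C (p + k) `\` C p) t * `|f t|.
  pose x t := \1_(~` C p) t * `|f t|.
  have Xu k : X (u k) by apply: Xind; apply: measurableD.
  have Xx : X x by apply: Xind; apply: measurableC.
  have hmon : {ae mu, forall t k, 0 <= u k t <= u k.+1 t}.
    apply: aeW => t k; rewrite /u; have [h|h] := pselect ((C (p + k) `\` C p) t).
      rewrite (@indic1 _ R _ t h) (@indic1 _ R (C (p + k.+1) `\` C p) t) ?mul1r ?lexx ?andbT //.
      by case: h => h1 h2; split => //; apply: Cmono h1; rewrite leq_add2l.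
    by rewrite (@indic0 _ R _ t h) mul0r lexx /= mulr_ge0.
  have hcv : {ae mu, forall t, (fun k => u k t) @ \oo --> x t}.
    apply: filterS aeG => t ht.
    have [Cp|nCp] := pselect (C p t).
      apply: cvg_near_cst; apply: nearW => k.
      rewrite /u /x (@indic0 _ R (C (p + k) `\` C p) t) ?(@indic0 _ R (~` C p) t) ?mul0r //.
        by case.
    have [f0|fn0] := eqVneq (f t) 0.
      by apply: cvg_near_cst; apply: nearW => k; rewrite /u /x f0 normr0 !mulr0.
    have [i0 Gi] := ht fn0.
    apply: cvg_near_cst; exists i0 => // k /= ik.
    rewrite /u /x (@indic1 _ R (C (p + k) `\` C p) t) ?(@indic1 _ R (~` C p) t) //.
    split => //; exists i0 => //; exact: leq_trans ik (leq_addl p k).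
  have Nu := hfatou u x Xu Xx hmon hcv.
  have Nx : N x = 1 by exact: compl (gC p).
  rewrite Nx in Nu.
  have e0 : 0 < i.+1%:R^-1 :> R by rewrite invr_gt0 ltr0Sn.
  have [M _ hM] := (cvgrPdist_lt _ _).1 Nu _ e0.
  have := hM M (leqnn M); rewrite /= => h.
  exists (p + M)%N; split; first exact: leq_addr.
  have := ler_norm (1 - N (u M)); move: h; rewrite /u.
  set z := N _; set e := i.+1%:R^-1; clearbody z e => h1 h2; lra.
pose sel' p i := projT1 (cid (sel p i)).
have hsel p i : (p <= sel' p i)%N /\
    1 - i.+1%:R^-1 < N (fun t => \1_(C (sel' p i) `\` C p) t * `|f t|).
  exact: (projT2 (cid (sel p i))).
pose ms := fix ms (i : nat) : nat := if i is i'.+1 then sel' (ms i') i' else 0%N.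
have msS i : ms i.+1 = sel' (ms i) i by [].
have ms_le i : (ms i <= ms i.+1)%N by rewrite msS; exact: (hsel _ _).1.
have ms_mono i j : (i <= j)%N -> (ms i <= ms j)%N.
  elim: j => [|j IH]; first by rewrite leqn0 => /eqP ->.
  rewrite leq_eqVlt => /orP[/eqP -> // | ]; rewrite ltnS => ij.
  exact: leq_trans (IH ij) (ms_le j).
pose P i := C (ms i.+1) `\` C (ms i).
apply: (construct hX f Xf Nf P).
- by move=> i; apply: measurableD.
- move=> i j t [Ci nCi] [Cj nCj]; apply/eqP; case: (ltngtP i j) => // ij; exfalso.
    by apply: nCj; apply: (Cmono (ms i.+1)) Ci; exact: ms_mono.
  by apply: nCi; apply: (Cmono (ms j.+1)) Cj; exact: ms_mono.
- by move=> i; rewrite /P msS; exact: (hsel _ _).2.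
Qed.

End Back.

Theorem theorem2p1 (d : measure_display) (T : measurableType d) (R : realType)
  (mu : {measure set T -> \bar R})
  (mu_sigma : sigma_finite setT mu) (mu_complete : measure_is_complete mu)
  (X : set (T -> R)) (N : (T -> R) -> R)
  (hX : banach_ideal_space mu X N)
  (hfatou : semi_fatou mu X N)
  (hsupp : same_support mu (Xa mu X N) X) :
  contains_lattice_isometric_linf mu X N <->
  exists f, X f /\ N f = 1 /\ distX N f (Xa mu X N) = 1.
Proof.
split; [exact: (forward hX) | exact: (backward hX mu_sigma hfatou hsupp)].
Qed.
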